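(* The wreath product $\mathbb{Z}_2 \wr \mathbb{Z}^2$ is Cayley $2$-tape linear-time computable.
   Context: For $k>1$, a $k$-tape Turing machine has $k$ semi-infinite tapes, each with the unmodifiable symbol $\boxplus$ in its leftmost cell (occurring only there); $\boxdot$ is the blank symbol. A function $f : \Sigma^* \to \Sigma^*$ is computed on a $k$-tape Turing machine in linear time if there is such a machine and a constant $C>0$ such that for every input $x \in \Sigma^*$ of length $n$, started with first tape $\boxplus x \boxdot^\infty$, the other tapes $\boxplus \boxdot^\infty$, all heads on $\boxplus$, the machine halts in an accepting state in at most $Cn$ steps with the first tape having prefix $\boxplus f(x) \boxdot$ (no restriction on anything else). A finitely generated group $G$ with finite set of semigroup generators $S$ is Cayley $k$-tape linear-time computable if there exist a finite alphabet $\Sigma$, a language $L \subseteq \Sigma^*$, a bijection $\psi : L \to G$ and, for each $s \in S$, a function $f_s : \Sigma^* \to \Sigma^*$ computed on a $k$-tape Turing machine in linear time such that $\psi(f_s(w)) = \psi(w)s$ for all $w \in L$ (this does not depend on the choice of $S$). $\mathbb{Z}_2 \wr \mathbb{Z}^2$ is the restricted wreath product (lamplighter group over $\mathbb{Z}^2$). *)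

(* Defs.v *)
From HB Require Import structures.
From mathcomp Require Import all_boot all_order all_algebra.
From mathcomp Require Import finmap.
Set Implicit Arguments. Unset Strict Implicit. Unset Printing Implicit Defensive.
Import GRing.Theory.

(* Tape symbols over input alphabet S and extra work alphabet W:             *)
(*   Some None       = the left-end marker (boxplus)                        *)
(*   Some (Some (inl a)) = input letter a, Some (Some (inr g)) = work symbol *)
Definition tsym (S W : finType) : finType := option (option (S + W)).
Definition blank {S W : finType} : tsym S W := None.
Definition mark {S W : finType} : tsym S W := Some None.
Definition inp {S W : finType} (a : S) : tsym S W := Some (Some (inl a)).

Inductive move := MoveL | MoveR | Stay.

Record TM (k : nat) (S : finType) := {
  tm_state : finType;
  tm_work : finType;
  tm_start : tm_state;
  tm_accept : pred tm_state;
  tm_delta : tm_state -> {ffun 'I_k -> tsym S tm_work} ->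
             option (tm_state * {ffun 'I_k -> tsym S tm_work * move})
}.
Arguments tm_start {k S} _.
Arguments tm_accept {k S} _.
Arguments tm_delta {k S} _.

(* The marker is unmodifiable and occurs only in the leftmost cell: when a   *)
(* head reads the marker it rewrites the marker and does not move left; when *)
(* it reads any other symbol it does not write the marker.                   *)
Definition TM_wf k S (M : TM k S) : Prop :=
  forall q r q' act (i : 'I_k), tm_delta M q r = Some (q', act) ->
    ((r i == mark) = ((act i).1 == mark)) /\ (r i == mark -> (act i).2 <> MoveL).

Record conf k S (M : TM k S) := {
  c_state : tm_state M;
  c_tape : 'I_k -> nat -> tsym S (tm_work M);
  c_head : 'I_k -> nat
}.

Definition c_read k S (M : TM k S) (c : conf M) : {ffun 'I_k -> tsym S (tm_work M)} :=
  [ffun i => c_tape c i (c_head c i)].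

Definition halted k S (M : TM k S) (c : conf M) : bool :=
  if tm_delta M (c_state c) (c_read c) is None then true else false.

Definition do_move (m : move) (h : nat) : nat :=
  match m with MoveL => h.-1 | MoveR => h.+1 | Stay => h end.

Definition step k S (M : TM k S) (c : conf M) : option (conf M) :=
  match tm_delta M (c_state c) (c_read c) with
  | None => None
  | Some (q', act) =>
      Some {| c_state := q';
              c_tape := fun i j => if j == c_head c i then (act i).1 else c_tape c i j;
              c_head := fun i => do_move (act i).2 (c_head c i) |}
  end.

Fixpoint run k S (M : TM k S) (t : nat) (c : conf M) : conf M :=
  match t with
  | 0 => c
  | t'.+1 => match step c with Some c' => run t' c' | None => c end
  end.

Definition init_conf k S (M : TM k S) (i0 : 'I_k) (x : seq S) : conf M :=
  {| c_state := tm_start M;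
     c_tape := fun i j =>
       if j == 0 then mark
       else if i == i0 then nth blank [seq inp a | a <- x] j.-1
       else blank;
     c_head := fun _ => 0 |}.

Definition tape_prefix k S (M : TM k S) (c : conf M) (i0 : 'I_k) (y : seq S) : Prop :=
  c_tape c i0 0 = mark /\
  (forall j, j < size y -> c_tape c i0 j.+1 = nth blank [seq inp a | a <- y] j) /\
  c_tape c i0 (size y).+1 = blank.

Definition lin_time_computable (k : nat) (S : finType) (f : seq S -> seq S) : Prop :=
  exists (i0 : 'I_k), nat_of_ord i0 = 0 /\
  exists (M : TM k S), TM_wf M /\
  exists C : nat, 0 < C /\
  forall x : seq S,
    exists t, t <= C * (size x).+1 /\
      let c := run t (init_conf M i0 x) in
      halted c /\ tm_accept M (c_state c) /\ tape_prefix c i0 (f x).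

Definition cayley_lin_time (k : nat) (G : eqType) (mul : G -> G -> G) (gens : seq G) : Prop :=
  exists (Sig : finType) (L : pred (seq Sig)) (psi : seq Sig -> G),
    {in L &, injective psi} /\
    (forall g : G, exists2 w, w \in L & psi w = g) /\
    (forall s, s \in gens ->
       exists f : seq Sig -> seq Sig,
         lin_time_computable k f /\
         forall w, w \in L -> f w \in L /\ psi (f w) = mul (psi w) s).

(* The lamplighter group Z_2 wr Z^2: pairs (A, p) with A a finite set of    *)
(* lit lamps in Z^2 and p the lamplighter position;                          *)
Local Open Scope fset_scope.
Definition Z2 := (int * int)%type.
Definition lamp := ({fset Z2} * Z2)%type.
Definition addZ2 (p q : Z2) : Z2 := (p.1 + q.1, p.2 + q.2)%R.
Definition shiftZ2 (p : Z2) (B : {fset Z2}) : {fset Z2} := [fset addZ2 p x | x in B].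
Definition symdiff (A B : {fset Z2}) : {fset Z2} := (A `\` B) `|` (B `\` A).
Definition lamp_mul (g h : lamp) : lamp :=
  (symdiff g.1 (shiftZ2 g.2 h.1), addZ2 g.2 h.2).

Definition lamp_gens : seq lamp :=
  [:: ([fset ((0:int), (0:int))], ((0:int), (0:int)));
      (fset0, ((1:int), (0:int)));  (fset0, ((-1)%R, (0:int)));
      (fset0, ((0:int), (1:int)));  (fset0, ((0:int), (-1)%R)) ].

(* Main.v *)
Require Import Defs.
From mathcomp Require Import all_boot all_order all_algebra finmap.
From mathcomp Require Import zify.
Set Implicit Arguments. Unset Strict Implicit. Unset Printing Implicit Defensive.

Fixpoint trun {S Q : Type} (dl : Q -> S -> Q * seq S) (fin : Q -> seq S) (q : Q) (w : seq S) : seq S :=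
  match w with [::] => fin q | a :: w' => (dl q a).2 ++ trun dl fin (dl q a).1 w' end.
Fixpoint tst {S Q : Type} (dl : Q -> S -> Q * seq S) (q : Q) (w : seq S) : Q :=
  match w with [::] => q | a :: w' => tst dl (dl q a).1 w' end.
Fixpoint tout {S Q : Type} (dl : Q -> S -> Q * seq S) (q : Q) (w : seq S) : seq S :=
  match w with [::] => [::] | a :: w' => (dl q a).2 ++ tout dl (dl q a).1 w' end.

Lemma trun_cat {S Q : Type} (dl : Q -> S -> Q * seq S) fin q u v :
  trun dl fin q (u ++ v) = tout dl q u ++ trun dl fin (tst dl q u) v.
Proof. by elim: u q => [|a u IH] q //=; rewrite IH catA. Qed.

Section TMC.
Variables (S Q : finType) (q0 : Q) (dl : Q -> S -> Q * seq S) (fin : Q -> seq S) (K : nat).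
Hypotheses (HK1 : forall q a, size (dl q a).2 <= K) (HK2 : forall q, size (fin q) <= K).

Notation ts := (tsym S void).
Definition stT : finType := ((Q + (Q * option S * 'I_K.+1)) + option bool)%type.
Definition Rd q : stT := inl (inl q).
Definition Em q oa i : stT := inl (inr (q, oa, i)).
Definition Rw : stT := inr None.
Definition Cp : stT := inr (Some false).
Definition Dn : stT := inr (Some true).
Definition outp q (oa : option S) := match oa with Some a => (dl q a).2 | None => fin q end.

Lemma outp_le q oa : size (outp q oa) <= K.
Proof. by case: oa => [a|] /=. Qed.

Definition two (x y : ts * move) := fun i : 'I_2 => if i == ord0 then x else y.

Definition dlt0 (s : stT) (r : {ffun 'I_2 -> ts}) : option (stT * ('I_2 -> ts * move)) :=
 let r0 := r ord0 in let r1 := r ord_max in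
 match s with
 | inl (inl q) => match r0 with
     | Some None => Some (Rd q, two (mark, MoveR) (mark, MoveR))
     | Some (Some (inl a)) => Some (Em q (Some a) ord0, two (r0, Stay) (r1, Stay))
     | _ => Some (Em q None ord0, two (r0, Stay) (r1, Stay))
     end
 | inl (inr (q, oa, i)) =>
     if i < size (outp q oa) then
       Some (Em q oa (inord i.+1), two (r0, Stay) (nth blank (map inp (outp q oa)) i, MoveR))
     else match oa with
          | Some a => Some (Rd (dl q a).1, two (r0, MoveR) (r1, Stay))
          | None => Some (Rw, two (r0, Stay) (r1, Stay)) end
 | inr None => if (r0 == mark) && (r1 == mark) then Some (Cp, two (mark, MoveR) (mark, MoveR))
               else Some (Rw, two (r0, MoveL) (r1, MoveL))
 | inr (Some false) => if r1 == blank then Some (Dn, two (blank, Stay) (r1, Stay))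
                       else Some (Cp, two (r1, MoveR) (r1, MoveR))
 | inr (Some true) => None
 end.

Definition safe (r : ts) (wm : ts * move) : ts * move :=
  if r == mark then (mark, if wm.2 is MoveL then Stay else wm.2)
  else (if wm.1 == mark then r else wm.1, wm.2).

Definition dlt (s : stT) (r : {ffun 'I_2 -> ts}) : option (stT * {ffun 'I_2 -> ts * move}) :=
  match dlt0 s r with
  | Some (s', g) => Some (s', [ffun i => safe (r i) (g i)])
  | None => None end.

Definition TMc : TM 2 S :=
  {| tm_state := stT; tm_work := void; tm_start := Rd q0;
     tm_accept := fun s => s == Dn; tm_delta := dlt |}.

Lemma TMc_wf : TM_wf TMc.
Proof.
move=> q r q' act i /=; rewrite /dlt; case: (dlt0 q r) => [[s g]|] // [_ <-].
rewrite ffunE /safe; case Hr: (r i == mark) => /=.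
  by split => //; case: (g i).2.
split => //; case Hm: ((g i).1 == mark) => /=; first by rewrite Hr.
by rewrite Hm.
Qed.

Definition nextc (c : conf TMc) (s' : stT) (act : {ffun 'I_2 -> ts * move}) : conf TMc :=
  @Build_conf 2 S TMc s'
     (fun i j => if j == c_head c i then (act i).1 else c_tape c i j)
     (fun i => do_move (act i).2 (c_head c i)).

Lemma runS n (c : conf TMc) s' g :
  dlt0 (c_state c) (c_read c) = Some (s', g) ->
  run n.+1 c = run n (nextc c s' [ffun i => safe (c_read c i) (g i)]).
Proof. by move=> H; rewrite /= /step /= /dlt H. Qed.

Lemma run0 (c : conf TMc) : run 0 c = c. Proof. by []. Qed.

Lemma run_add a b (c : conf TMc) : run (a + b) c = run b (run a c).
Proof.
elim: a c => [|a IH] c //=; case E: (step c) => [c'|] //.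
by elim: b {IH} => [|b IHb] //=; rewrite E.
Qed.


Definition tp (s : seq S) (j : nat) : ts := if j is j'.+1 then nth blank (map inp s) j' else mark.

Lemma tp_nm s j : tp s j.+1 != mark.
Proof. by rewrite /=; elim: s j => [|a s IH] [|j] //=. Qed.

Lemma tp_last s : tp s (size s).+1 = blank.
Proof. by rewrite /= nth_default // size_map. Qed.

Lemma tp_nth s j b : j < size s -> tp s j.+1 = inp (nth b s j).
Proof. by move=> h; rewrite /= (nth_map b). Qed.

Lemma tp_rcons s b k : (if k == (size s).+1 then inp b else tp s k) = tp (rcons s b) k.
Proof.
case: k => [|k] //=; rewrite eqSS map_rcons nth_rcons size_map.
case: (ltngtP k (size s)) => h //.
by rewrite nth_default ?size_map // ltnW.
Qed.

Lemma safe_keep r : safe r (r, Stay) = (r, Stay).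
Proof. by rewrite /safe; case: eqP => [->|]. Qed.

Lemma safe_nm r w m : r != mark -> w != mark -> safe r (w, m) = (w, m).
Proof. by rewrite /safe => /negbTE -> /negbTE ->. Qed.

Lemma safe_mm m : m <> MoveL -> safe mark (mark, m) = (mark, m).
Proof. by rewrite /safe eqxx /=; case: m. Qed.

Lemma nextc_tape c s' g i k :
  c_tape (nextc c s' [ffun i => safe (c_read c i) (g i)]) i k =
  if k == c_head c i then (safe (c_tape c i (c_head c i)) (g i)).1 else c_tape c i k.
Proof. by rewrite /= !ffunE. Qed.

Lemma nextc_head c s' g i :
  c_head (nextc c s' [ffun i => safe (c_read c i) (g i)]) i =
  do_move (safe (c_tape c i (c_head c i)) (g i)).2 (c_head c i).
Proof. by rewrite /= !ffunE. Qed.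

Lemma nextc_state c s' g :
  c_state (nextc c s' [ffun i => safe (c_read c i) (g i)]) = s'.
Proof. by []. Qed.

Lemma readE (c : conf TMc) i : c_read c i = c_tape c i (c_head c i).
Proof. by rewrite ffunE. Qed.

Lemma keep_tape c s' g i : g i = (c_read c i, Stay) ->
  (forall k, c_tape (nextc c s' [ffun i => safe (c_read c i) (g i)]) i k = c_tape c i k) /\
  c_head (nextc c s' [ffun i => safe (c_read c i) (g i)]) i = c_head c i.
Proof.
move=> E; rewrite nextc_head E readE safe_keep; split => // k.
by rewrite nextc_tape E readE safe_keep; case: eqP => [->|].
Qed.

Lemma two0 (x y : ts * move) : two x y ord0 = x. Proof. by []. Qed.
Lemma two1 (x y : ts * move) : two x y ord_max = y. Proof. by []. Qed.

Section Phases.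
Variable x : seq S.

Definition Inv1 (c : conf TMc) q o j :=
  [/\ c_state c = Rd q, c_head c ord0 = j.+1, c_head c ord_max = (size o).+1,
      (forall k, c_tape c ord0 k = tp x k) & (forall k, c_tape c ord_max k = tp o k)].

Lemma emit q oa o suf : forall pre (c : conf TMc) (i : 'I_K.+1) j,
  outp q oa = pre ++ suf -> (i : nat) = size pre ->
  c_state c = Em q oa i -> c_head c ord0 = j -> c_head c ord_max = (size (o ++ pre)).+1 ->
  (forall k, c_tape c ord0 k = tp x k) -> (forall k, c_tape c ord_max k = tp (o ++ pre) k) ->
  exists i' : 'I_K.+1, (i' : nat) = size (outp q oa) /\
   let c' := run (size suf) c in
   [/\ c_state c' = Em q oa i', c_head c' ord0 = j, c_head c' ord_max = (size (o ++ outp q oa)).+1,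
      (forall k, c_tape c' ord0 k = tp x k) & (forall k, c_tape c' ord_max k = tp (o ++ outp q oa) k)].
Proof.
elim: suf => [|b suf IH] pre c i j Eo Ei Hs H0 H1 T0 T1.
  by exists i; rewrite Eo cats0 /=; split => //; split => //.
have Hi : i < size (outp q oa) by rewrite Eo Ei size_cat /= addnS ltnS leq_addr.
have Hn : nth blank (map inp (outp q oa)) i = (inp b : ts).
  by rewrite Eo Ei map_cat nth_cat size_map ltnn subnn.
have D : dlt0 (c_state c) (c_read c) = Some (Em q oa (inord i.+1),
   two (c_read c ord0, Stay) (nth blank (map inp (outp q oa)) i, MoveR)).
  by rewrite Hs /= Hi.
have -> : size (b :: suf) = (size suf).+1 by []. rewrite (runS _ D).
have [K0 K0h] := @keep_tape c (Em q oa (inord i.+1)) (two (c_read c ord0, Stay) (nth blank (map inp (outp q oa)) i, MoveR)) ord0 erefl.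
have Hr1 : c_tape c ord_max (c_head c ord_max) = blank by rewrite H1 T1 tp_last.
have Hsf : safe (c_tape c ord_max (c_head c ord_max)) (two (c_read c ord0, Stay) (nth blank (map inp (outp q oa)) i, MoveR) ord_max) = (inp b, MoveR).
  by rewrite two1 Hn Hr1 safe_nm.
apply: (IH (rcons pre b) _ (inord i.+1)).
- by rewrite Eo cat_rcons.
- have Hle : i.+1 < K.+1 by rewrite ltnS; exact: leq_trans Hi (outp_le q oa).
  by rewrite inordK // size_rcons Ei.
- by [].
- by rewrite K0h.
- by rewrite nextc_head Hsf H1 /= !size_cat size_rcons addnS.
- by move=> k; rewrite K0.
- by move=> k; rewrite nextc_tape Hsf H1 T1 -rcons_cat -tp_rcons.
Qed.


Lemma phase1 v : forall u q o (c : conf TMc), x = u ++ v -> Inv1 c q o (size u) ->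
  exists k, k <= (K + 2) * size v /\ Inv1 (run k c) (tst dl q v) (o ++ tout dl q v) (size x).
Proof.
elim: v => [|a v IH] u q o c Ex [Hs H0 H1 T0 T1].
  by exists 0; split => //; rewrite cats0 Ex cats0; split.
have Hr0 : c_read c ord0 = inp a.
  by rewrite readE H0 T0 (tp_nth a) Ex ?size_cat /= ?addnS ?ltnS ?leq_addr // nth_cat ltnn subnn.
have D1 : dlt0 (c_state c) (c_read c) = Some (Em q (Some a) ord0,
   two (c_read c ord0, Stay) (c_read c ord_max, Stay)).
  by rewrite Hs /= Hr0.
pose c1 := nextc c (Em q (Some a) ord0) [ffun i => safe (c_read c i) (two (c_read c ord0, Stay) (c_read c ord_max, Stay) i)].
have [K10 K10h] := @keep_tape c (Em q (Some a) ord0) (two (c_read c ord0, Stay) (c_read c ord_max, Stay)) ord0 erefl.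
have [K11 K11h] := @keep_tape c (Em q (Some a) ord0) (two (c_read c ord0, Stay) (c_read c ord_max, Stay)) ord_max erefl.
have E1 : c_head c1 ord_max = (size (o ++ [::])).+1 by rewrite cats0 K11h.
have E2 : forall k, c_tape c1 ord_max k = tp (o ++ [::]) k by move=> k; rewrite cats0 K11 T1.
have [i' [Ei' [S2 H20 H21 T20 T21]]] := @emit q (Some a) o (outp q (Some a)) [::] c1 ord0 (size u).+1 erefl erefl erefl
  (etrans K10h H0) E1 (fun k => etrans (K10 k) (T0 k)) E2.
pose c2 := run (size (outp q (Some a))) c1.
have Hr20 : c_read c2 ord0 = inp a by rewrite readE H20 T20 -H0 -T0 -readE.
have D2 : dlt0 (c_state c2) (c_read c2) = Some (Rd (dl q a).1,
   two (c_read c2 ord0, MoveR) (c_read c2 ord_max, Stay)).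
  by rewrite S2 /= Ei' ltnn.
pose c3 := nextc c2 (Rd (dl q a).1) [ffun i => safe (c_read c2 i) (two (c_read c2 ord0, MoveR) (c_read c2 ord_max, Stay) i)].
have [K31 K31h] := @keep_tape c2 (Rd (dl q a).1) (two (c_read c2 ord0, MoveR) (c_read c2 ord_max, Stay)) ord_max erefl.
have Hsf : safe (c_tape c2 ord0 (c_head c2 ord0)) (two (c_read c2 ord0, MoveR) (c_read c2 ord_max, Stay) ord0) = (inp a, MoveR).
  by rewrite two0 -readE Hr20 safe_nm.
have I3 : Inv1 c3 (dl q a).1 (o ++ (dl q a).2) (size (rcons u a)).
  split => //.
  - by rewrite nextc_head Hsf H20 size_rcons.
  - by rewrite K31h H21.
  - by move=> k; rewrite nextc_tape Hsf -T20; case: eqP => [->|] //; rewrite -readE Hr20.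
  - by move=> k; rewrite K31 T21.
have Ex' : x = rcons u a ++ v by rewrite Ex cat_rcons.
have [k' [Hk' I']] := IH (rcons u a) _ _ c3 Ex' I3.
exists (size (dl q a).2 + k'.+1).+1; split.
  rewrite /= mulnS; have := HK1 q a; lia.
rewrite (runS _ D1) -/c1 run_add -/c2 (runS _ D2) -/c3.
by rewrite /= catA.
Qed.

Lemma phase_end q o (c : conf TMc) : Inv1 c q o (size x) ->
  exists k, k <= K + 2 /\
   let c' := run k c in
   [/\ c_state c' = Rw, c_head c' ord0 = (size x).+1, c_head c' ord_max = (size (o ++ fin q)).+1,
      (forall k, c_tape c' ord0 k = tp x k) & (forall k, c_tape c' ord_max k = tp (o ++ fin q) k)].
Proof.
move=> [Hs H0 H1 T0 T1].
have Hr0 : c_read c ord0 = blank by rewrite readE H0 T0 tp_last.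
have D1 : dlt0 (c_state c) (c_read c) = Some (Em q None ord0,
   two (c_read c ord0, Stay) (c_read c ord_max, Stay)).
  by rewrite Hs /= Hr0.
pose c1 := nextc c (Em q None ord0) [ffun i => safe (c_read c i) (two (c_read c ord0, Stay) (c_read c ord_max, Stay) i)].
have [K10 K10h] := @keep_tape c (Em q None ord0) (two (c_read c ord0, Stay) (c_read c ord_max, Stay)) ord0 erefl.
have [K11 K11h] := @keep_tape c (Em q None ord0) (two (c_read c ord0, Stay) (c_read c ord_max, Stay)) ord_max erefl.
have E1 : c_head c1 ord_max = (size (o ++ [::])).+1 by rewrite cats0 K11h.
have E2 : forall k, c_tape c1 ord_max k = tp (o ++ [::]) k by move=> k; rewrite cats0 K11 T1.
have [i' [Ei' [S2 H20 H21 T20 T21]]] := @emit q None o (outp q None) [::] c1 ord0 (size x).+1 erefl erefl erefl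
  (etrans K10h H0) E1 (fun k => etrans (K10 k) (T0 k)) E2.
pose c2 := run (size (outp q None)) c1.
have D2 : dlt0 (c_state c2) (c_read c2) = Some (Rw,
   two (c_read c2 ord0, Stay) (c_read c2 ord_max, Stay)).
  by rewrite S2 /= Ei' ltnn.
have [K30 K30h] := @keep_tape c2 Rw (two (c_read c2 ord0, Stay) (c_read c2 ord_max, Stay)) ord0 erefl.
have [K31 K31h] := @keep_tape c2 Rw (two (c_read c2 ord0, Stay) (c_read c2 ord_max, Stay)) ord_max erefl.
exists (size (fin q) + 1).+1; split; first by have := HK2 q; lia.
cbv zeta; rewrite (runS _ D1) -/c1 run_add -/c2 (runS 0 D2) run0.
split => //.
- by rewrite K30h H20.
- by rewrite K31h H21.
- by move=> k; rewrite K30 T20.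
- by move=> k; rewrite K31 T21.
Qed.

End Phases.


Lemma movL_tape (c : conf TMc) s' g i (t : nat -> ts) :
  g i = (c_read c i, MoveL) -> (forall k, c_tape c i k = t k) -> t 0 = mark -> (forall k, t k.+1 != mark) ->
  (forall k, c_tape (nextc c s' [ffun i => safe (c_read c i) (g i)]) i k = t k) /\
  c_head (nextc c s' [ffun i => safe (c_read c i) (g i)]) i = (c_head c i).-1.
Proof.
move=> E T t0 tn; rewrite nextc_head E readE; split.
  move=> k; rewrite nextc_tape E readE; case: eqP => [->|_]; last exact: T.
  by rewrite -T /safe; case: eqP => [->|].
rewrite T; case: (c_head c i) => [|h]; first by rewrite t0 /safe eqxx.
by rewrite safe_nm.
Qed.

Lemma rewind n : forall (c : conf TMc) (t0 t1 : nat -> ts), c_state c = Rw ->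
  maxn (c_head c ord0) (c_head c ord_max) = n ->
  (forall k, c_tape c ord0 k = t0 k) -> (forall k, c_tape c ord_max k = t1 k) ->
  t0 0 = mark -> t1 0 = mark -> (forall k, t0 k.+1 != mark) -> (forall k, t1 k.+1 != mark) ->
  let c' := run n c in
  [/\ c_state c' = Rw, c_head c' ord0 = 0, c_head c' ord_max = 0,
      (forall k, c_tape c' ord0 k = t0 k) & (forall k, c_tape c' ord_max k = t1 k)].
Proof.
elim: n => [|n IH] c t0 t1 Hs Hm T0 T1 z0 z1 n0 n1.
  by cbv zeta; rewrite run0; split => //; lia.
have Hnb : ((c_read c ord0 == mark) && (c_read c ord_max == mark)) = false.
  rewrite !readE T0 T1; move: Hm.
  case: (c_head c ord0) => [|a]; case: (c_head c ord_max) => [|b] //= _.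
  - by rewrite (negbTE (n1 _)) andbF.
  - by rewrite (negbTE (n0 _)).
  - by rewrite (negbTE (n0 _)).
have D : dlt0 (c_state c) (c_read c) = Some (Rw, two (c_read c ord0, MoveL) (c_read c ord_max, MoveL)).
  by rewrite Hs /= Hnb.
cbv zeta; rewrite (runS _ D).
have [A0 B0] := @movL_tape c Rw (two (c_read c ord0, MoveL) (c_read c ord_max, MoveL)) ord0 t0 erefl T0 z0 n0.
have [A1 B1] := @movL_tape c Rw (two (c_read c ord0, MoveL) (c_read c ord_max, MoveL)) ord_max t1 erefl T1 z1 n1.
apply: IH => //; rewrite B0 B1; lia.
Qed.

Lemma copy (O : seq S) m : forall (c : conf TMc) j, c_state c = Cp ->
  c_head c ord0 = j.+1 -> c_head c ord_max = j.+1 -> j + m = size O ->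
  (forall k, c_tape c ord_max k = tp O k) -> (forall k, k <= j -> c_tape c ord0 k = tp O k) ->
  (forall k, c_tape c ord0 k.+1 != mark) ->
  let c' := run m c in
  [/\ c_state c' = Cp, c_head c' ord0 = (size O).+1 /\ c_head c' ord_max = (size O).+1,
      (forall k, c_tape c' ord_max k = tp O k), (forall k, k <= size O -> c_tape c' ord0 k = tp O k)
    & (forall k, c_tape c' ord0 k.+1 != mark)].
Proof.
elim: m => [|m IH] c j Hs H0 H1 Hj T1 T0 N0.
  by cbv zeta; rewrite run0 -Hj addn0.
have Hjl : j < size O by lia.
have [a0 _] : exists a0 : S, True by case: (O) Hjl => // a0 _ _; exists a0.
have Hr1 : c_read c ord_max = inp (nth a0 O j) by rewrite readE H1 T1 (tp_nth a0).
have D : dlt0 (c_state c) (c_read c) = Some (Cp, two (c_read c ord_max, MoveR) (c_read c ord_max, MoveR)).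
  by rewrite Hs /= Hr1.
cbv zeta; rewrite (runS _ D).
have Hs0 : safe (c_tape c ord0 (c_head c ord0)) (two (c_read c ord_max, MoveR) (c_read c ord_max, MoveR) ord0) = (inp (nth a0 O j), MoveR).
  by rewrite two0 Hr1 H0 safe_nm.
have Hs1 : safe (c_tape c ord_max (c_head c ord_max)) (two (c_read c ord_max, MoveR) (c_read c ord_max, MoveR) ord_max) = (inp (nth a0 O j), MoveR).
  by rewrite two1 -readE Hr1 safe_nm.
apply: (IH _ j.+1) => //.
- by rewrite nextc_head Hs0 H0.
- by rewrite nextc_head Hs1 H1.
- lia.
- move=> k; rewrite nextc_tape Hs1 /=; case: eqP => [->|_]; last exact: T1.
  by rewrite H1 (tp_nth a0).
- move=> k hk; rewrite nextc_tape Hs0 H0 /=; case: eqP => [->|ne]; first by rewrite (tp_nth a0).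
  by apply: T0; lia.
- by move=> k; rewrite nextc_tape Hs0 H0; case: ifP => _; [|exact: N0].
Qed.

Lemma copy_end (O : seq S) (c : conf TMc) : c_state c = Cp ->
  c_head c ord0 = (size O).+1 -> c_head c ord_max = (size O).+1 ->
  (forall k, c_tape c ord_max k = tp O k) -> (forall k, k <= size O -> c_tape c ord0 k = tp O k) ->
  (forall k, c_tape c ord0 k.+1 != mark) ->
  halted (run 1 c) /\ tm_accept TMc (c_state (run 1 c)) /\ tape_prefix (run 1 c) ord0 O.
Proof.
move=> Hs H0 H1 T1 T0 N0.
have Hr1 : c_read c ord_max = blank by rewrite readE H1 T1 tp_last.
have D : dlt0 (c_state c) (c_read c) = Some (Dn, two (blank, Stay) (c_read c ord_max, Stay)).
  by rewrite Hs /= Hr1.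
rewrite (runS _ D) run0.
have Hs0 : safe (c_tape c ord0 (c_head c ord0)) (two (blank, Stay) (c_read c ord_max, Stay) ord0) = (blank, Stay).
  by rewrite two0 H0 safe_nm.
split; first by [].
split; first by [].
split; last split.
- by rewrite nextc_tape Hs0 H0 /= T0.
- move=> k hk; rewrite nextc_tape Hs0 H0 /= eqSS (ltn_eqF hk) T0 //; exact: ltnW.
- by rewrite nextc_tape Hs0 H0 /= eqxx.
Qed.

Lemma size_trun q w : size (trun dl fin q w) <= K * (size w).+1.
Proof.
elim: w q => [|a w IH] q /=; first by rewrite muln1.
by rewrite size_cat mulnS leq_add.
Qed.

Theorem trans_lin : lin_time_computable 2 (trun dl fin q0).
Proof.
exists ord0; split => //; exists TMc; split; first exact: TMc_wf.
exists (4 * K + 10); split; first lia.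
move=> x.
pose c0 := init_conf TMc ord0 x.
have R0 : forall i, c_read c0 i = mark by move=> i; rewrite readE.
have D0 : dlt0 (c_state c0) (c_read c0) = Some (Rd q0, two (mark, MoveR) (mark, MoveR)).
  by rewrite /= R0.
pose c1 := nextc c0 (Rd q0) [ffun i => safe (c_read c0 i) (two (mark, MoveR) (mark, MoveR) i)].
have Sf : forall i, safe (c_tape c0 i (c_head c0 i)) (two (mark, MoveR) (mark, MoveR) i) = (mark, MoveR).
  by move=> i; rewrite -readE R0; case: (i == ord0); rewrite /two; case: ifP.
have I1 : Inv1 x c1 q0 (@nil S) (size (@nil S)).
  split => //.
  - by rewrite nextc_head Sf.
  - by rewrite nextc_head Sf.
  - by move=> k; rewrite nextc_tape Sf; case: k.
  - by move=> k; rewrite nextc_tape Sf; case: k => //= k; rewrite nth_nil.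
have [k1 [Hk1 I2]] := @phase1 x x [::] q0 [::] c1 erefl I1.
rewrite cat0s in I2.
have [k2 [Hk2 [S3 H30 H31 T30 T31]]] := phase_end I2.
set O := tout dl q0 x ++ fin (tst dl q0 x) in H31 T31.
have EO : trun dl fin q0 x = O by have := trun_cat dl fin q0 x [::]; rewrite cats0.
pose c3 := run k2 (run k1 c1).
have [S4 H40 H41 T40 T41] := @rewind (maxn (size x).+1 (size O).+1) c3 (tp x) (tp O) S3
  ltac:(by rewrite H30 H31) T30 T31 erefl erefl (@tp_nm x) (@tp_nm O).
pose c4 := run (maxn (size x).+1 (size O).+1) c3.
have D4 : dlt0 (c_state c4) (c_read c4) = Some (Cp, two (mark, MoveR) (mark, MoveR)).
  by rewrite S4 /= !readE H40 H41 T40 T41.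
pose c5 := nextc c4 Cp [ffun i => safe (c_read c4 i) (two (mark, MoveR) (mark, MoveR) i)].
have Sf4 : forall i, safe (c_tape c4 i (c_head c4 i)) (two (mark, MoveR) (mark, MoveR) i) = (mark, MoveR).
  move=> i; have -> : c_tape c4 i (c_head c4 i) = mark.
    have [->|->] : i = ord0 \/ i = ord_max.
      case: i => [[|[|m]] Hm]; [left; exact/val_inj | right; exact/val_inj | by []].
    by rewrite H40 T40.
    by rewrite H41 T41.
  by rewrite /two; case: ifP.
have [S6 [H60 H61] T61 T60 N6] := @copy O (size O) c5 0 erefl
  ltac:(by rewrite nextc_head Sf4 H40) ltac:(by rewrite nextc_head Sf4 H41) erefl
  ltac:(by move=> k; rewrite nextc_tape Sf4 H41 T41; case: k)
  ltac:(by move=> k; rewrite leqn0 => /eqP ->; rewrite nextc_tape Sf4 H40)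
  ltac:(by move=> k; rewrite nextc_tape Sf4 H40 T40 tp_nm).
have [F1 [F2 F3]] := copy_end S6 H60 H61 T61 T60 N6.
exists (1 + k1 + k2 + maxn (size x).+1 (size O).+1 + 1 + size O + 1); split.
  have := size_trun q0 x; rewrite EO => HO.
  rewrite /= in Hk1; nia.
rewrite EO !run_add (runS 0 D0) run0 -/c1 -/c3 -/c4 (runS 0 D4) run0 -/c5.
by [].
Qed.

End TMC.

Import GRing.Theory Num.Theory.
Local Open Scope fset_scope.

Definition Sig : finType := option bool.
Definition P : Sig := Some true.
Definition M : Sig := Some false.
Definition Sp : Sig := None.

Definition encint (z : int) : seq Sig :=
  match z with Posz n => nseq n P | Negz n => nseq n.+1 M end ++ [:: Sp].

Fixpoint decints (w : seq Sig) (acc : int) : seq int :=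
  match w with
  | [::] => [::]
  | None :: w' => acc :: decints w' 0
  | Some true :: w' => decints w' (acc + 1)%R
  | Some false :: w' => decints w' (acc - 1)%R
  end.

Lemma decints_P n w a : decints (nseq n P ++ w) a = decints w (a + n%:Z)%R.
Proof. elim: n a => [|n IH] a /=; first by rewrite addr0. by rewrite IH; congr decints; lia. Qed.

Lemma decints_M n w a : decints (nseq n M ++ w) a = decints w (a - n%:Z)%R.
Proof. elim: n a => [|n IH] a /=; first by rewrite subr0. by rewrite IH; congr decints; lia. Qed.

Lemma decints_enc z w : decints (encint z ++ w) 0 = z :: decints w 0.
Proof.
case: z => n /=; rewrite -catA ?decints_P ?decints_M /=; congr cons; lia.
Qed.

Definition encpt (p : Z2) := encint p.1 ++ encint p.2.
Definition pts (l : seq Z2) : seq Sig := flatten (map encpt l).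
Fixpoint pairs (zs : seq int) : seq Z2 :=
  match zs with a :: b :: r => (a, b) :: pairs r | _ => [::] end.

Lemma decints_pts l : pairs (decints (pts l) 0) = l.
Proof.
elim: l => [|[a b] l IH] //=.
by rewrite /pts /= -/(pts l) /encpt /= -catA !decints_enc /= IH.
Qed.

Definition leZ2 (a b : Z2) : bool := (a.1 < b.1)%R || ((a.1 == b.1) && (a.2 <= b.2)%R).
Definition ltZ2 (a b : Z2) : bool := (a.1 < b.1)%R || ((a.1 == b.1) && (a.2 < b.2)%R).

Lemma leZ2_total : total leZ2.
Proof. move=> [a b] [c d]; rewrite /leZ2 /=; apply/orP; case: (ltrgtP a c) => h; lia. Qed.
Lemma ltZ2_trans : transitive ltZ2.
Proof. move=> [a b] [c d] [e f]; rewrite /ltZ2 /= => /orP[h|/andP[/eqP h h']] /orP[g|/andP[/eqP g g']]; apply/orP; lia. Qed.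
Lemma ltZ2_irr : irreflexive ltZ2.
Proof. move=> [a b]; rewrite /ltZ2 /=; lia. Qed.

Definition cl (B : {fset Z2}) : seq Z2 := sort leZ2 (enum_fset B).

Lemma mem_cl B y : (y \in cl B) = (y \in B).
Proof. by rewrite mem_sort. Qed.

Lemma cl_sorted B : sorted ltZ2 (cl B).
Proof.
have : uniq (cl B) by rewrite sort_uniq; exact: fset_uniq.
have : sorted leZ2 (cl B) by apply: sort_sorted; exact: leZ2_total.
elim: (cl B) => [|x s IH] //=; case: s IH => [|y s] IH //= /andP[lxy ps] /andP[].
rewrite inE negb_or => /andP[nxy _] u; have /= -> := IH ps u; rewrite andbT.
by move: lxy nxy {IH ps u}; case: x => a b; case: y => c d; rewrite /leZ2 /ltZ2 /= xpair_eqE; lia.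
Qed.

Lemma cl_eq B s : sorted ltZ2 s -> (forall y, (y \in s) = (y \in B)) -> cl B = s.
Proof.
move=> ss hs; apply: (irr_sorted_eq ltZ2_trans ltZ2_irr (cl_sorted B) ss) => y.
by rewrite mem_cl hs.
Qed.

Definition negZ2 (p : Z2) : Z2 := (- p.1, - p.2)%R.

Lemma mem_shift p B y : (y \in shiftZ2 p B) = ((y.1 - p.1, y.2 - p.2)%R \in B).
Proof.
apply/imfsetP/idP => [[x xB ->]|h].
  case: x xB => a b xB; rewrite /addZ2 /=.
  by have -> : ((p.1 + a - p.1), (p.2 + b - p.2))%R = (a, b) by congr pair; lia.
exists (y.1 - p.1, y.2 - p.2)%R => //; case: y {h} => a b /=; rewrite /addZ2 /=; congr pair; lia.
Qed.

Definition enc (g : lamp) : seq Sig := encpt g.2 ++ pts (cl (shiftZ2 (negZ2 g.2) g.1)).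

Definition mkset (l : seq Z2) : {fset Z2} := seq_fset tt l.
Arguments mkset : simpl never.
Lemma mem_mkset l y : (y \in mkset l) = (y \in l).
Proof. exact: seq_fsetE. Qed.

Definition dec (w : seq Sig) : lamp :=
  match decints w 0 with
  | px :: py :: r => (shiftZ2 (px, py) (mkset (pairs r)), (px, py))
  | _ => (fset0, (0%R, 0%R))
  end.

Lemma dec_enc g : dec (enc g) = g.
Proof.
case: g => A [px py]; rewrite /dec /enc /encpt /= -catA !decints_enc decints_pts.
congr pair; apply/fsetP => [[a b]].
rewrite mem_shift mem_mkset mem_cl mem_shift /=.
by have -> : ((a - px - - px), (b - py - - py))%R = (a, b) by congr pair; lia.
Qed.

Lemma encint_inc z : encint (z + 1)%R =
  match z with Posz n => nseq n.+1 P ++ [:: Sp] | Negz n => nseq n M ++ [:: Sp] end.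
Proof.
case: z => n.
  by have -> : (Posz n + 1)%R = Posz n.+1 by lia.
case: n => [|n]; first by have -> : (Negz 0 + 1)%R = Posz 0 by lia.
by have -> : (Negz n.+1 + 1)%R = Negz n by lia.
Qed.

Lemma encint_dec z : encint (z - 1)%R =
  match z with Posz 0 => [:: M; Sp] | Posz n.+1 => nseq n P ++ [:: Sp]
             | Negz n => nseq n.+2 M ++ [:: Sp] end.
Proof.
case: z => [[|n]|n].
- by have -> : (Posz 0 - 1)%R = Negz 0 by lia.
- by have -> : (Posz n.+1 - 1)%R = Posz n by lia.
- by have -> : (Negz n - 1)%R = Negz n.+1 by lia.
Qed.

Notation stM := ((bool * bool) * option (option bool))%type.
Definition nextk (k : bool * bool) := (k.1 || k.2, ~~ k.2).

Definition tokstep (d : int) (ts : option (option bool)) (a : Sig) :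
    option (option bool) * seq Sig * bool :=
  match ts with
  | None => match a with
      | None => (None, (if d == 1%R then [:: P; Sp] else if d == (-1)%R then [:: M; Sp] else [:: Sp]), true)
      | Some true => if d == 1%R then (Some (Some true), [:: P], false)
                     else if d == (-1)%R then (Some None, [::], false) else (Some None, [:: P], false)
      | Some false => if d == 1%R then (Some None, [::], false)
                     else if d == (-1)%R then (Some (Some false), [:: M], false) else (Some None, [:: M], false)
      end
  | Some None => match a with None => (None, [:: Sp], true) | Some b => (Some None, [:: Some b], false) end
  | Some (Some c) => match a with None => (None, [:: Some c; Sp], true)
                                 | Some b => (Some (Some c), [:: Some b], false) end
  end.

Section Move.
Variables (dx dy : int).
Definition opk (k : bool * bool) : int := let d := if k.2 then dy else dx in if k.1 then (- d)%R else d.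

Definition mvdl (q : stM) (a : Sig) : stM * seq Sig :=
  let: (ts', out, dn) := tokstep (opk q.1) q.2 a in
  (if dn then (nextk q.1, None) else (q.1, ts'), out).
Definition mvfin (q : stM) : seq Sig := [::].
Arguments mvdl : simpl never.

Notation tr := (trun mvdl mvfin).

Lemma copy_plain k n (b : bool) w :
  tr (k, Some None) (nseq n (Some b) ++ Sp :: w) = nseq n (Some b) ++ Sp :: tr (nextk k, None) w.
Proof. by elim: n => [|n IH] //=; rewrite IH. Qed.

Lemma copy_app k c n (b : bool) w :
  tr (k, Some (Some c)) (nseq n (Some b) ++ Sp :: w) = nseq n (Some b) ++ Some c :: Sp :: tr (nextk k, None) w.
Proof. by elim: n => [|n IH] //=; rewrite IH. Qed.

Lemma nseq_sh (T : Type) n (a : T) s : nseq n a ++ a :: s = a :: nseq n a ++ s.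
Proof. by elim: n => //= n ->. Qed.

Lemma trun_cons (dl : stM -> Sig -> stM * seq Sig) fin q a w :
  trun dl fin q (a :: w) = (dl q a).2 ++ trun dl fin (dl q a).1 w.
Proof. by []. Qed.

Lemma tok k z w : opk k = 1%R \/ opk k = (-1)%R \/ opk k = 0%R ->
  tr (k, None) (encint z ++ w) = encint (z + opk k)%R ++ tr (nextk k, None) w.
Proof.
move=> Hd; case: Hd => [|[]] E.
- rewrite E encint_inc; case: z => [[|n]|n]; rewrite /encint -?catA ?cat1s trun_cons.
  + by have -> : mvdl (k, None) Sp = ((nextk k, None), [:: P; Sp]) by rewrite /mvdl E.
  + have -> : mvdl (k, None) P = ((k, Some (Some true)), [:: P]) by rewrite /mvdl E.
    by rewrite /= copy_app /= nseq_sh.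
  + have -> : mvdl (k, None) M = ((k, Some None), [::]) by rewrite /mvdl E.
    by rewrite /= copy_plain /= ?nseq_sh.
- rewrite E encint_dec; case: z => [[|n]|n]; rewrite /encint -?catA ?cat1s trun_cons.
  + by have -> : mvdl (k, None) Sp = ((nextk k, None), [:: M; Sp]) by rewrite /mvdl E.
  + have -> : mvdl (k, None) P = ((k, Some None), [::]) by rewrite /mvdl E.
    by rewrite /= copy_plain /= ?nseq_sh.
  + have -> : mvdl (k, None) M = ((k, Some (Some false)), [:: M]) by rewrite /mvdl E.
    by rewrite /= copy_app /= ?nseq_sh.
- rewrite E addr0; case: z => [[|n]|n]; rewrite /encint -?catA ?cat1s trun_cons.
  + by have -> : mvdl (k, None) Sp = ((nextk k, None), [:: Sp]) by rewrite /mvdl E.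
  + have -> : mvdl (k, None) P = ((k, Some None), [:: P]) by rewrite /mvdl E.
    by rewrite /= copy_plain /= ?nseq_sh.
  + have -> : mvdl (k, None) M = ((k, Some None), [:: M]) by rewrite /mvdl E.
    by rewrite /= copy_plain /= ?nseq_sh.
Qed.

End Move.

Lemma pts_cons x l : pts (x :: l) = encpt x ++ pts l. Proof. by []. Qed.

Lemma mem_symdiff A B y : (y \in symdiff A B) = ((y \in A) != (y \in B)).
Proof. by rewrite /symdiff in_fsetU !in_fsetD; case: (y \in A); case: (y \in B). Qed.

Lemma ltZ2_shift (dx dy : int) :
  {homo (fun pt : Z2 => (pt.1 - dx, pt.2 - dy)%R) : x y / ltZ2 x y >-> ltZ2 x y}.
Proof. move=> [a b] [c d]; rewrite /ltZ2 /=; lia. Qed.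

Lemma nk0 : nextk (false, false) = (false, true). Proof. by []. Qed.
Lemma nk1 : nextk (true, false) = (true, true). Proof. by []. Qed.
Lemma nk2 : nextk (true, true) = (true, false). Proof. by []. Qed.
Lemma nk3 : nextk (false, true) = (true, false). Proof. by []. Qed.

Lemma mem_map_sh (dx dy : int) (s : seq Z2) y :
  (y \in map (fun pt : Z2 => (pt.1 - dx, pt.2 - dy)%R) s) = ((y.1 + dx, y.2 + dy)%R \in s).
Proof.
apply/mapP/idP => [[[u v] xs ->]|h] /=.
  by have -> : ((u - dx + dx), (v - dy + dy))%R = (u, v) by congr pair; lia.
exists (y.1 + dx, y.2 + dy)%R => //; case: y {h} => u v /=; congr pair; lia.
Qed.

Section MoveThm.
Variables (dx dy : int).
Hypotheses (Hx : dx = 1%R \/ dx = (-1)%R \/ dx = 0%R) (Hy : dy = 1%R \/ dy = (-1)%R \/ dy = 0%R).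

Lemma opk_ok k : opk dx dy k = 1%R \/ opk dx dy k = (-1)%R \/ opk dx dy k = 0%R.
Proof. rewrite /opk; case: k => [[] []] /=; lia. Qed.

Lemma mv_pts l : trun (mvdl dx dy) (@mvfin) ((true, false), None) (pts l) =
  pts (map (fun pt : Z2 => (pt.1 - dx, pt.2 - dy)%R) l).
Proof.
elim: l => [|[a b] l IH] //; rewrite map_cons !pts_cons /encpt -catA /=.
rewrite (tok (k := (true,false)) _ _ (opk_ok _)) nk1 (tok (k := (true,true)) _ _ (opk_ok _)) nk2.
by rewrite IH -catA.
Qed.

Lemma mv_enc g : trun (mvdl dx dy) (@mvfin) ((false, false), None) (enc g) =
  enc (lamp_mul g (fset0, (dx, dy))).
Proof.
case: g => A [px py]; rewrite /enc /encpt /= -catA.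
rewrite (tok (k := (false,false)) _ _ (opk_ok _)) nk0 (tok (k := (false,true)) _ _ (opk_ok _)) nk3 mv_pts.
rewrite -catA; congr (encint _ ++ encint _ ++ pts _); apply/esym/cl_eq.
  by apply: homo_sorted; [exact: ltZ2_shift | exact: cl_sorted].
move=> [a b].
rewrite mem_map_sh mem_cl !mem_shift mem_symdiff mem_shift in_fset0 /=.
rewrite (_ : ((a - - (px + dx)), (b - - (py + dy)))%R = ((a + dx - - px), (b + dy - - py))%R); first by case: (_ \in A).
by congr pair; lia.
Qed.

End MoveThm.

Notation stG := (option (option (option bool))).
Definition tgdl (q : stG) (a : Sig) : stG * seq Sig :=
  match q with
  | None => match a with
      | None => (Some None, [::])
      | Some false => (Some (Some (Some true)), [:: M])
      | Some true => (Some (Some None), [:: Sp; Sp; P])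
      end
  | Some None => match a with
      | Some false => (Some (Some (Some false)), [:: Sp; M])
      | None => (Some (Some None), [::])
      | Some true => (Some (Some None), [:: Sp; Sp; Sp; P])
      end
  | Some (Some None) => (Some (Some None), [:: a])
  | Some (Some (Some b)) => match a with
      | None => ((if b then Some (Some (Some false)) else None), [:: Sp])
      | Some c => (q, [:: Some c])
      end
  end.
Definition tgfin (q : stG) : seq Sig := if q is None then [:: Sp; Sp] else [::].
Notation tg := (trun tgdl tgfin).
Definition O2 : Z2 := (0%R, 0%R).

Definition toggle0 := fix toggle0 (l : seq Z2) : seq Z2 :=
  match l with
  | [::] => [:: O2]
  | x :: l' => if ltZ2 x O2 then x :: toggle0 l' else if x == O2 then l' else O2 :: x :: l'
  end.

Lemma tg_rest w : tg (Some (Some None)) w = w.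
Proof. elim: w => [|a w IH] /=; first by []. by rewrite IH. Qed.

Lemma tg_cp b n c w : tg (Some (Some (Some b))) (nseq n (Some c) ++ Sp :: w) =
  nseq n (Some c) ++ Sp :: tg (if b then Some (Some (Some false)) else None) w.
Proof. by elim: n => [|n IH] //=; rewrite IH. Qed.

Lemma tg_cpint b z w : tg (Some (Some (Some b))) (encint z ++ w) =
  encint z ++ tg (if b then Some (Some (Some false)) else None) w.
Proof. case: z => n; rewrite /encint -!catA; [exact: (tg_cp b n true w) | exact: (tg_cp b n.+1 false w)]. Qed.

Lemma lt_neg m b : ltZ2 (Negz m, b) O2. Proof. rewrite /ltZ2 /=; lia. Qed.
Lemma lt_0neg m : ltZ2 (0%R, Negz m) O2. Proof. rewrite /ltZ2 /=; lia. Qed.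
Lemma lt_pos m b : ltZ2 (Posz m.+1, b) O2 = false. Proof. rewrite /ltZ2 /=; lia. Qed.
Lemma lt_0pos m : ltZ2 (0%R, Posz m.+1) O2 = false. Proof. rewrite /ltZ2 /=; lia. Qed.
Lemma eq_pos m b : ((Posz m.+1, b) == O2) = false. Proof. by []. Qed.
Lemma eq_0pos m : ((0%R, Posz m.+1) == O2) = false. Proof. by []. Qed.

Lemma tg_search l : tg None (pts l) = pts (toggle0 l).
Proof.
elim: l => [|[a b] l IH] //; rewrite pts_cons /encpt /= -catA.
case: a => [[|m]|m].
- rewrite /= -catA /=.
  case: b => [[|k]|k].
  + by rewrite /= tg_rest.
  + by rewrite /= tg_rest !pts_cons /encpt /= -!catA.
  + by rewrite /= ?lt_0neg /= tg_cp IH pts_cons /encpt /= -!catA.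
- by rewrite /= ?lt_pos ?eq_pos /= tg_rest !pts_cons /encpt /= -!catA.
- by rewrite /= ?lt_neg /= -catA tg_cp tg_cpint IH pts_cons /encpt /= -!catA.
Qed.

Lemma ltZ2_tri x : ~~ ltZ2 x O2 -> x != O2 -> ltZ2 O2 x.
Proof. case: x => a b; rewrite /ltZ2 /O2 /= xpair_eqE; lia. Qed.

Lemma tg_path a l : ltZ2 a O2 -> path ltZ2 a l -> path ltZ2 a (toggle0 l).
Proof.
elim: l a => [|x l IH] a ha /=; first by rewrite ha.
case/andP=> hax pxl.
case: ifP => hx0; first by rewrite /= hax IH.
case: ifP => hx; first by apply: (path_le ltZ2_trans hax).
by rewrite /= ha (ltZ2_tri (negbT hx0) (negbT hx)) pxl.
Qed.

Lemma tg_sorted l : sorted ltZ2 l -> sorted ltZ2 (toggle0 l).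
Proof.
case: l => [|x l] //= pxl.
case: ifP => hx0; first exact: tg_path.
case: ifP => hx; first exact: path_sorted pxl.
by rewrite /= (ltZ2_tri (negbT hx0) (negbT hx)) pxl.
Qed.

Lemma tg_mem l y : sorted ltZ2 l -> (y \in toggle0 l) = ((y \in l) != (y == O2)).
Proof.
elim: l => [|x l IH] /=; first by rewrite !inE; case: (y == O2).
move=> pxl; have sl := path_sorted pxl.
have allx := order_path_min ltZ2_trans pxl.
case: ifP => hx0.
  rewrite inE IH // inE; case: (eqVneq y x) => [->|] //=.
  by case: (eqVneq x O2) hx0 => [->|] //; rewrite (ltZ2_irr O2).
case: ifP => hx.
  rewrite inE (eqP hx); case: (eqVneq y O2) => [->|_] /=; last by case: (y \in l).
  rewrite ?eqxx /=.
  apply/negbTE/negP => h; move/allP: allx => /(_ _ h).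
  by rewrite (eqP hx) ltZ2_irr.
have h0x := ltZ2_tri (negbT hx0) (negbT hx).
rewrite !inE; case: (eqVneq y O2) => [->|_] /=; last by case: (y == x); case: (y \in l).
rewrite (eq_sym O2 x) hx /=; suff -> : (O2 \in l) = false by [].
apply/negbTE/negP => h; move/allP: allx => /(_ _ h) hx'.
by have := ltZ2_trans h0x hx'; rewrite ltZ2_irr.
Qed.

Lemma tg_enc g : tg (Some (Some (Some true))) (enc g) = enc (lamp_mul g ([fset O2], O2)).
Proof.
case: g => A [px py]; rewrite /enc /encpt /= -catA tg_cpint tg_cpint /= tg_search.
rewrite /addZ2 /= !addr0 -catA; congr (encint _ ++ encint _ ++ pts _); apply/esym/cl_eq.
  by apply: tg_sorted; exact: cl_sorted.
move=> [a b]; rewrite tg_mem ?cl_sorted // mem_cl !mem_shift mem_symdiff mem_shift in_fset1 /=.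
rewrite (_ : ((a - - px - px), (b - - py - py))%R = (a, b)) //; congr pair; lia.
Qed.

Definition Lp : pred (seq Sig) := fun w => w == enc (dec w).

Lemma enc_in g : enc g \in Lp.
Proof. by rewrite unfold_in /Lp dec_enc. Qed.

Lemma gen_ok (f : seq Sig -> seq Sig) s : (forall g, f (enc g) = enc (lamp_mul g s)) ->
  forall w, w \in Lp -> f w \in Lp /\ dec (f w) = lamp_mul (dec w) s.
Proof.
move=> H w Lw; rewrite (eqP Lw) H; split; last by rewrite !dec_enc.
by rewrite unfold_in /Lp dec_enc.
Qed.

Lemma mv_bound dx dy q a : size (mvdl dx dy q a).2 <= 2.
Proof.
case: q => [[k1 k2] [[[]|]|]]; case: a => [[]|]; rewrite /mvdl /tokstep /=;
  repeat case: ifP => //.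
all: by [].
Qed.

Lemma tg_bound q a : size (tgdl q a).2 <= 4.
Proof. by case: q => [[[[]|]|]|]; case: a => [[]|]. Qed.

Lemma mv_lin dx dy : lin_time_computable 2 (trun (mvdl dx dy) mvfin ((false, false), None)).
Proof. by apply: (@trans_lin _ _ _ _ _ 2) => // q a; exact: mv_bound. Qed.

Lemma tg_lin : lin_time_computable 2 (trun tgdl tgfin (Some (Some (Some true)))).
Proof. apply: (@trans_lin _ _ _ _ _ 4) => //; first exact: tg_bound. by case=> [[[]|]|]. Qed.

Theorem theorem2p2 : cayley_lin_time 2 lamp_mul lamp_gens.
Proof.
exists Sig, Lp, dec; split.
  by move=> u v Lu Lv e; rewrite (eqP Lu) (eqP Lv) e.
split.
  by move=> g; exists (enc g); [exact: enc_in | exact: dec_enc].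
move=> s; rewrite !inE => /orP[/eqP->|/orP[/eqP->|/orP[/eqP->|/orP[/eqP->|/eqP->]]]].
- exists (trun tgdl tgfin (Some (Some (Some true)))); split; first exact: tg_lin.
  by apply: gen_ok; exact: tg_enc.
- exists (trun (mvdl 1 0) mvfin ((false, false), None)); split; first exact: mv_lin.
  by apply: gen_ok => g; apply: mv_enc; lia.
- exists (trun (mvdl (-1) 0) mvfin ((false, false), None)); split; first exact: mv_lin.
  by apply: gen_ok => g; apply: mv_enc; lia.
- exists (trun (mvdl 0 1) mvfin ((false, false), None)); split; first exact: mv_lin.
  by apply: gen_ok => g; apply: mv_enc; lia.
- exists (trun (mvdl 0 (-1)) mvfin ((false, false), None)); split; first exact: mv_lin.
  by apply: gen_ok => g; apply: mv_enc; lia.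
Qed.
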